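(* Let $a,b\ge1$, $P=[a]\times[b]$, $n=a+b$. For every $f\in(\mathbb R^+)^P$, if $Q(f)=(q_1,q_2,\dots,q_n)$ then $Q(\pi_{\mathcal B}f)=(q_2,q_3,\dots,q_n,q_1)$.
   Context: $[a]\times[b]=\{(i,j)\in\mathbb Z^2:1\le i\le a,\ 1\le j\le b\}$ with the product order. Let $\widehat P=P\cup\{\hat0,\hat1\}$ with $\hat0<x<\hat1$ for all $x\in P$; write $y\lessdot x$ for covering relations; $x^+=\{y\in\widehat P:y\gtrdot x\}$, $x^-=\{y\in\widehat P:y\lessdot x\}$. Each $f:P\to\mathbb R^+$ is extended by $\hat f(\hat0)=\hat f(\hat1)=1$. Parallel sum: $s_1\parallel\cdots\parallel s_m=(1/s_1+\cdots+1/s_m)^{-1}$. The birational toggle $\tau_x$ changes only the value at $x$: $(\tau_xf)(x)=\frac{1}{f(x)}\bigl(\sum_{y\in x^-}\hat f(y)\bigr)\bigl(\|_{y\in x^+}\hat f(y)\bigr)$. The $k$-th file ($1\le k\le n-1$) is $\{(i,j)\in P:j-i+a=k\}$; $\tau^*_k$ is the composition of the toggles over file $k$; birational promotion is $\pi_{\mathcal B}=\tau^*_{n-1}\circ\cdots\circ\tau^*_1$. For $f\in(\mathbb R^+)^P$ let $p_k=\prod_{x\in\text{file }k}f(x)$ for $1\le k\le n-1$, $p_0=p_n=1$, $q_k=p_k/p_{k-1}$ for $1\le k\le n$; $Q(f)=(q_1,\dots,q_n)$. *)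

(* Defs.v *)
From HB Require Import structures.
From mathcomp Require Import all_boot all_order all_algebra.
Set Implicit Arguments. Unset Strict Implicit. Unset Printing Implicit Defensive.
Import Order.TTheory GRing.Theory Num.Theory.
Local Open Scope ring_scope.

(* The poset P = [a] x [b]; element (i0, j0) : 'I_a * 'I_b stands for the
   pair (i, j) = (i0 + 1, j0 + 1). *)
Definition grid (a b : nat) : finType := ('I_a * 'I_b)%type.

Definition grid_le (a b : nat) (x y : grid a b) : bool :=
  ((nat_of_ord x.1 <= nat_of_ord y.1)%N && (nat_of_ord x.2 <= nat_of_ord y.2)%N).

(* P-hat = P plus 0-hat and 1-hat, encoded as option (option P):
   None = 0-hat, Some None = 1-hat, Some (Some x) = x. *)
Definition hat (a b : nat) : finType := option (option (grid a b)).
Definition hbot (a b : nat) : hat a b := None.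
Definition htop (a b : nat) : hat a b := Some None.
Definition helt (a b : nat) (x : grid a b) : hat a b := Some (Some x).

Definition hat_le (a b : nat) (u v : hat a b) : bool :=
  match u, v with
  | None, _ => true
  | _, Some None => true
  | Some (Some x), Some (Some y) => grid_le x y
  | _, _ => false
  end.

Definition hat_lt (a b : nat) (u v : hat a b) : bool := hat_le u v && (u != v).

Definition hat_cover (a b : nat) (u v : hat a b) : bool :=
  hat_lt u v && ~~ [exists z : hat a b, hat_lt u z && hat_lt z v].

Definition fhat (R : realFieldType) (a b : nat) (f : grid a b -> R) (u : hat a b) : R :=
  match u with
  | Some (Some x) => f x
  | _ => 1
  end.

Definition toggle (R : realFieldType) (a b : nat) (x : grid a b) (f : grid a b -> R)
  : grid a b -> R :=
  fun z => if z == x then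
     (f x)^-1 * (\sum_(y : hat a b | hat_cover y (helt x)) fhat f y)
              * (\sum_(y : hat a b | hat_cover (helt x) y) (fhat f y)^-1)^-1
   else f z.

Definition in_file (a b : nat) (k : nat) (x : grid a b) : bool :=
  ((nat_of_ord x.2 + a)%N == (k + nat_of_ord x.1)%N).

(* tau*_k : composition of the toggles over file k (they commute) *)
Definition file_toggle (R : realFieldType) (a b : nat) (k : nat) (f : grid a b -> R)
  : grid a b -> R :=
  foldr (fun x g => toggle x g) f (enum [pred x : grid a b | in_file k x]).

Definition bpromotion (R : realFieldType) (a b : nat) (f : grid a b -> R)
  : grid a b -> R :=
  foldl (fun g k => file_toggle k g) f (iota 1 (a + b - 1)).

(* p_k = product of f over file k (this is 1 for k = 0 and k = n, the files
   being empty there) *)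
Definition pfile (R : realFieldType) (a b : nat) (f : grid a b -> R) (k : nat) : R :=
  \prod_(x : grid a b | in_file k x) f x.

Definition qfile (R : realFieldType) (a b : nat) (f : grid a b -> R) (k : nat) : R :=
  pfile f k / pfile f k.-1.

Definition Qvec (R : realFieldType) (a b : nat) (f : grid a b -> R) : seq R :=
  [seq qfile f k | k <- iota 1 (a + b)].

(* Main.v *)
Require Import Defs.
From HB Require Import structures.
From mathcomp Require Import all_boot all_order all_algebra.
From mathcomp Require Import zify ring lra.
Set Implicit Arguments. Unset Strict Implicit. Unset Printing Implicit Defensive.
Import Order.TTheory GRing.Theory Num.Theory.
Local Open Scope ring_scope.

Section Covers.
Variables a b : nat.
Local Notation G := (grid a b).
Local Notation H := (hat a b).

Lemma helt_eq (v w : G) :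
  (helt v == helt w) = ((v.1 : nat) == w.1) && ((v.2 : nat) == w.2).
Proof. by case: v w => [v1 v2] [w1 w2]. Qed.

Lemma hlt_elt (v w : G) : hat_lt (helt v) (helt w) =
  [&& (v.1 <= w.1)%N, (v.2 <= w.2)%N & ~~ (((v.1 : nat) == w.1) && ((v.2 : nat) == w.2))].
Proof. by rewrite /hat_lt /= helt_eq /grid_le andbA. Qed.

Definition lowc (x : G) (y : H) : bool :=
  match y with
  | None => ((x.1 : nat) == 0%N) && ((x.2 : nat) == 0%N)
  | Some None => false
  | Some (Some w) => (((w.1.+1 : nat) == x.1) && ((w.2 : nat) == x.2))
                  || (((w.1 : nat) == x.1) && ((w.2.+1 : nat) == x.2))
  end.

Definition upc (x : G) (y : H) : bool :=
  match y with
  | None => false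
  | Some None => ((x.1.+1 : nat) == a) && ((x.2.+1 : nat) == b)
  | Some (Some w) => (((x.1.+1 : nat) == w.1) && ((x.2 : nat) == w.2))
                  || (((x.1 : nat) == w.1) && ((x.2.+1 : nat) == w.2))
  end.

Lemma cover_lo (x : G) (y : H) : hat_cover y (helt x) = lowc x y.
Proof.
case: x => [[x1 hx1] [x2 hx2]].
case: y => [[[[w1 hw1] [w2 hw2]]|]|] /=.
- rewrite /hat_cover hlt_elt /=.
  apply/idP/idP.
  + move=> /andP [h1 /existsPn hno]; apply/negPn/negP => hs.
    have [lt1|ge1] := ltnP w1 x1.
    * have hz : (w1.+1 < a)%N by lia.
      move: (hno (helt (Ordinal hz, Ordinal hw2))).
      by rewrite !hlt_elt /=; lia.
    * have hz : (w2.+1 < b)%N.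
        by lia.
      move: (hno (helt (Ordinal hw1, Ordinal hz))).
      by rewrite !hlt_elt /=; lia.
  + move=> hs; apply/andP; split; first by lia.
    apply/existsPn => -[[[[v1 hv1] [v2 hv2]]|]|] //=;
      rewrite ?hlt_elt /= /hat_lt /= ?andbF //; lia.
- rewrite /hat_cover /hat_lt /=.
  by [].
- rewrite /hat_cover /hat_lt /=.
  apply/idP/idP.
  + move=> /existsPn hno; apply/negPn/negP => hs.
    have h0a : (0 < a)%N by lia.
    have h0b : (0 < b)%N by lia.
    move: (hno (helt (Ordinal h0a, Ordinal h0b))).
    by rewrite /= helt_eq /= /grid_le /=; lia.
  + move=> hs; apply/existsPn => -[[[[v1 hv1] [v2 hv2]]|]|] //=;
      rewrite ?helt_eq /= ?/grid_le /= ?andbF //; lia.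
Qed.

Lemma cover_up (x : G) (y : H) : hat_cover (helt x) y = upc x y.
Proof.
case: x => [[x1 hx1] [x2 hx2]].
case: y => [[[[w1 hw1] [w2 hw2]]|]|] /=.
- rewrite /hat_cover hlt_elt /=.
  apply/idP/idP.
  + move=> /andP [h1 /existsPn hno]; apply/negPn/negP => hs.
    have [lt1|ge1] := ltnP x1 w1.
    * have hz : (x1.+1 < a)%N by lia.
      move: (hno (helt (Ordinal hz, Ordinal hx2))).
      by rewrite !hlt_elt /=; lia.
    * have hz : (x2.+1 < b)%N.
        by lia.
      move: (hno (helt (Ordinal hx1, Ordinal hz))).
      by rewrite !hlt_elt /=; lia.
  + move=> hs; apply/andP; split; first by lia.
    apply/existsPn => -[[[[v1 hv1] [v2 hv2]]|]|] //=;
      rewrite ?hlt_elt /= /hat_lt /= ?andbF //; lia.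
- rewrite /hat_cover /hat_lt /=.
  apply/idP/idP.
  + move=> /existsPn hno; apply/negPn/negP => hs.
    have h0a : (a.-1 < a)%N by lia.
    have h0b : (b.-1 < b)%N by lia.
    move: (hno (helt (Ordinal h0a, Ordinal h0b))).
    by rewrite /= helt_eq /= /grid_le /=; lia.
  + move=> hs; apply/existsPn => -[[[[v1 hv1] [v2 hv2]]|]|] //=;
      rewrite ?helt_eq /= ?/grid_le /= ?andbF //; lia.
- by rewrite /hat_cover /hat_lt /=.
Qed.
End Covers.

Lemma big_option_sum (R : realFieldType) (T : finType) (F : option T -> R) :
  \sum_(y : option T) F y = F None + \sum_(x : T) F (Some x).
Proof.
rewrite [index_enum _]unlock.
rewrite (_ : Finite.enum _ = None :: [seq Some x | x <- index_enum T]); last first.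
  by rewrite [index_enum T]unlock; rewrite [in LHS]unlock.
by rewrite big_cons big_map.
Qed.

Section Sums.
Variable R : realFieldType.
Variables a b : nat.
Local Notation A := a.+1.
Local Notation B := b.+1.
Local Notation G := (grid A B).
Local Notation H := (hat A B).

Definition Gv (g : G -> R) (i j : nat) : R := g (inord i.-1, inord j.-1).
Definition inb (i j : nat) : bool := [&& (0 < i)%N, (i <= A)%N, (0 < j)%N & (j <= B)%N].
Definition Gz (g : G -> R) i j : R := if inb i j then Gv g i j else 0.
Definition Go (g : G -> R) i j : R := if inb i j then Gv g i j else 1.

Lemma g_Gv (g : G -> R) (x : G) : g x = Gv g x.1.+1 x.2.+1.
Proof. by rewrite /Gv /= !inord_val; case: x. Qed.

Lemma sum_grid_pt (F : nat -> nat -> R) (P : nat -> nat -> bool) c m m' :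
  (forall i j, P i j = [&& c, i == m & j == m']) ->
  \sum_(w : G) (if P w.1 w.2 then F w.1 w.2 else 0)
  = if [&& c, (m < A)%N & (m' < B)%N] then F m m' else 0.
Proof.
move=> hP.
case: (boolP [&& c, (m < A)%N & (m' < B)%N]) => [/and3P [hc hm hm'] | hn].
  rewrite (bigD1 (Ordinal hm, Ordinal hm')) //= hP hc !eqxx /=.
  rewrite big1 ?addr0 // => -[i j] /=; rewrite hP hc /= xpair_eqE => hne.
  case: ifP => // /andP [/eqP him /eqP hjm]; move: hne.
  by rewrite -!val_eqE /= him hjm !eqxx.
rewrite big1 // => -[i j] _ /=; rewrite hP.
case: ifP => // /and3P [hc /eqP him /eqP hjm]; move: hn.
by rewrite hc -him -hjm !ltn_ord.
Qed.

Definition Lsum (g : G -> R) (x : G) : R :=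
  \sum_(y : H | hat_cover y (helt x)) fhat g y.
Definition Usum (g : G -> R) (x : G) : R :=
  \sum_(y : H | hat_cover (helt x) y) (fhat g y)^-1.

Lemma if_or (P Q : bool) (v : R) : ~~ (P && Q) ->
  (if P || Q then v else 0) = (if P then v else 0) + (if Q then v else 0).
Proof. by case: P; case: Q => //= _; rewrite ?addr0 ?add0r. Qed.

Lemma LsumE (g : G -> R) (x : G) :
  Lsum g x = (if ((x.1 : nat) == 0%N) && ((x.2 : nat) == 0%N) then 1 else 0)
           + Gz g x.1 x.2.+1 + Gz g x.1.+1 x.2.
Proof.
rewrite /Lsum big_mkcond /= big_option_sum big_option_sum /=.
under eq_bigr => y do rewrite cover_lo.
rewrite cover_lo /= add0r -addrA; congr (_ + _).
rewrite (eq_bigr (fun w : G => (if ((w.1.+1:nat) == x.1) && ((w.2 : nat) == x.2) then Gv g w.1.+1 w.2.+1 else 0) + (if ((w.1:nat) == x.1) && ((w.2.+1:nat) == x.2) then Gv g w.1.+1 w.2.+1 else 0))); last first.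
  by move=> w _; rewrite /= -g_Gv if_or //; lia.
rewrite big_split /=.
congr (_ + _).
  rewrite (@sum_grid_pt (fun i j => Gv g i.+1 j.+1) (fun i j => (i.+1 == x.1) && (j == x.2)) (0 < x.1)%N x.1.-1 x.2); last by move=> *; lia.
  rewrite /Gz /inb; case: x => [[x1 hx1] [x2 hx2]] /=.
  case: x1 hx1 => [|x1] hx1 /=; first by [].
  by [].
rewrite (@sum_grid_pt (fun i j => Gv g i.+1 j.+1) (fun i j => (i == x.1) && (j.+1 == x.2)) (0 < x.2)%N x.1 x.2.-1); last by move=> *; lia.
rewrite /Gz /inb; case: x => [[x1 hx1] [x2 hx2]] /=.
case: x2 hx2 => [|x2] hx2 /=; first by rewrite !andbF.
by [].
Qed.

Lemma UsumE (g : G -> R) (x : G) :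
  Usum g x = (if ((x.1.+1 : nat) == A) && ((x.2.+1 : nat) == B) then 1 else 0)
           + (Gz g x.1.+2 x.2.+1)^-1 + (Gz g x.1.+1 x.2.+2)^-1.
Proof.
rewrite /Usum big_mkcond /= big_option_sum big_option_sum /=.
rewrite !cover_up /= add0r invr1 -addrA; congr (_ + _).
rewrite (eq_bigr (fun w : G => (if ((x.1.+1:nat) == w.1) && ((x.2 : nat) == w.2) then (Gv g w.1.+1 w.2.+1)^-1 else 0) + (if ((x.1:nat) == w.1) && ((x.2.+1:nat) == w.2) then (Gv g w.1.+1 w.2.+1)^-1 else 0))); last first.
  by move=> w _; rewrite /= cover_up /= -g_Gv if_or //; lia.
rewrite big_split /=.
congr (_ + _).
  rewrite (@sum_grid_pt (fun i j => (Gv g i.+1 j.+1)^-1) (fun i j => ((x.1.+1 : nat) == i) && ((x.2 : nat) == j)) true x.1.+1 x.2); last by move=> *; lia.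
  rewrite /Gz /inb; case: x => [[x1 hx1] [x2 hx2]] /=.
  by case: ifP; rewrite ?invr0.
rewrite (@sum_grid_pt (fun i j => (Gv g i.+1 j.+1)^-1) (fun i j => ((x.1 : nat) == i) && ((x.2.+1 : nat) == j)) true x.1 x.2.+1); last by move=> *; lia.
rewrite /Gz /inb; case: x => [[x1 hx1] [x2 hx2]] /=.
by case: ifP; rewrite ?invr0.
Qed.
End Sums.

Section Main.
Variable R : realFieldType.
Variables a b : nat.
Local Notation A := a.+1.
Local Notation B := b.+1.
Local Notation G := (grid A B).
Local Notation H := (hat A B).

Definition Tv (g : G -> R) (x : G) : R := (g x)^-1 * Lsum g x * (Usum g x)^-1.

Lemma toggleE (x : G) (g : G -> R) z :
  toggle x g z = if z == x then Tv g x else g z.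
Proof. by []. Qed.

Lemma cover_file_lo k (w x : G) :
  hat_cover (helt w) (helt x) -> in_file k x -> ~~ in_file k w.
Proof. rewrite cover_lo /in_file /=; lia. Qed.

Lemma cover_file_up k (w x : G) :
  hat_cover (helt x) (helt w) -> in_file k x -> ~~ in_file k w.
Proof. rewrite cover_up /in_file /=; lia. Qed.

Lemma foldr_toggle k (g : G -> R) (s : seq G) :
  uniq s -> all (in_file k) s -> forall z,
  foldr (fun x h => toggle x h) g s z = if z \in s then Tv g z else g z.
Proof.
elim: s => [|x s IH] //= /andP [xs us] /andP [kx ks] z.
rewrite toggleE in_cons.
have IH' := IH us ks.
have eqg : forall w, ~~ in_file k w -> foldr (fun x h => toggle x h) g s w = g w.
  move=> w nw; rewrite IH'; case: ifP => // ws.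
  by move/allP: ks => /(_ w ws); rewrite (negbTE nw).
case: (eqVneq z x) => [->|zx] /=.
  rewrite /Tv IH' (negbTE xs); congr (_ * _ * (_)^-1).
    rewrite /Lsum; apply: eq_bigr => -[[w|]|] // hc /=.
    by rewrite eqg //; apply: cover_file_lo hc kx.
  rewrite /Usum; apply: eq_bigr => -[[w|]|] // hc /=.
  by rewrite eqg //; apply: cover_file_up hc kx.
by rewrite IH'.
Qed.

Lemma file_toggleE k (g : G -> R) z :
  file_toggle k g z = if in_file k z then Tv g z else g z.
Proof.
rewrite /file_toggle (@foldr_toggle k) ?enum_uniq ?mem_enum //.
by apply/allP => x; rewrite mem_enum.
Qed.

Lemma Gz_ge0 (g : G -> R) i j : (forall x, 0 < g x) -> 0 <= Gz g i j.
Proof. by move=> hg; rewrite /Gz; case: ifP => // _; apply/ltW/hg. Qed.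

Lemma Gz_gt0 (g : G -> R) i j : (forall x, 0 < g x) -> inb a b i j -> 0 < Gz g i j.
Proof. by move=> hg; rewrite /Gz => ->; apply/hg. Qed.

Lemma Lsum_gt0 (g : G -> R) x : (forall x, 0 < g x) -> 0 < Lsum g x.
Proof.
move=> hg; rewrite LsumE.
case: x => [[x1 hx1] [x2 hx2]] /=.
have h1 := Gz_ge0 x1 x2.+1 hg; have h2 := Gz_ge0 x1.+1 x2 hg.
case: (boolP ((x1 == 0%N) && (x2 == 0%N))) => h0.
  by rewrite -addrA; apply: ltr_pwDl => //; apply: addr_ge0.
rewrite add0r.
case: (posnP x1) => hx1'.
  have : 0 < Gz g x1.+1 x2 by apply: Gz_gt0 => //; rewrite /inb; lia.
  by move=> h; apply: ltr_pwDr.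
have : 0 < Gz g x1 x2.+1 by apply: Gz_gt0 => //; rewrite /inb; lia.
by move=> h; apply: ltr_pwDl.
Qed.

Lemma Usum_gt0 (g : G -> R) x : (forall x, 0 < g x) -> 0 < Usum g x.
Proof.
move=> hg; rewrite UsumE.
case: x => [[x1 hx1] [x2 hx2]] /=.
have h1 : 0 <= (Gz g x1.+2 x2.+1)^-1 by rewrite invr_ge0; apply: Gz_ge0.
have h2 : 0 <= (Gz g x1.+1 x2.+2)^-1 by rewrite invr_ge0; apply: Gz_ge0.
case: (boolP ((x1.+1 == A) && (x2.+1 == B))) => h0.
  by rewrite -addrA; apply: ltr_pwDl => //; apply: addr_ge0.
rewrite add0r.
case: (ltnP x1.+1 A) => hx1'.
  have : 0 < (Gz g x1.+2 x2.+1)^-1 by rewrite invr_gt0; apply: Gz_gt0 => //; rewrite /inb; lia.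
  by move=> h; apply: ltr_pwDl.
have : 0 < (Gz g x1.+1 x2.+2)^-1 by rewrite invr_gt0; apply: Gz_gt0 => //; rewrite /inb; lia.
by move=> h; apply: ltr_pwDr.
Qed.

Lemma Tv_gt0 (g : G -> R) x : (forall x, 0 < g x) -> 0 < Tv g x.
Proof.
move=> hg; rewrite /Tv; apply: mulr_gt0; first apply: mulr_gt0.
- by rewrite invr_gt0.
- exact: Lsum_gt0.
- by rewrite invr_gt0; apply: Usum_gt0.
Qed.

Lemma file_toggle_gt0 k (g : G -> R) : (forall x, 0 < g x) -> forall x, 0 < file_toggle k g x.
Proof. by move=> hg x; rewrite file_toggleE; case: ifP => _; [apply: Tv_gt0|]. Qed.


Definition inr (k t : nat) : bool := [&& (0 < t)%N, (t <= A)%N, (A < t + k)%N & (t + k <= A + B)%N].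
Definition pt (k t : nat) : G := (inord t.-1, inord (t + k - A).-1).

Lemma prod_cat (F : nat -> R) m n p : (m <= n)%N -> (n <= p)%N ->
  \prod_(m <= i < p) F i = \prod_(m <= i < n) F i * \prod_(n <= i < p) F i.
Proof. exact: big_cat_nat. Qed.

Lemma fileprod (h : G -> R) k N : (A < N)%N ->
  \prod_(x : G | in_file k x) h x = \prod_(0 <= t < N) (if inr k t then h (pt k t) else 1).
Proof.
move=> hN.
rewrite (@prod_cat _ 0 1); [|lia|lia].
rewrite big_nat1 (_ : inr k 0 = false) // mul1r.
rewrite (@prod_cat _ 1 A.+1); [|lia|lia].
rewrite [X in _ * X]big1_seq ?mulr1; last first.
  move=> t /andP [_]; rewrite mem_index_iota => ht; case: ifP => //; rewrite /inr; lia.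
rewrite big_add1 /= big_mkord.
transitivity (\prod_(i < A) \prod_(j < B | in_file k (i, j)) h (i, j)).
  by rewrite pair_big_dep /=; apply: eq_big => -[i j].
apply: eq_bigr => i _.
case: ifP => hin.
  have hj : ((i.+1 + k - A).-1 < B)%N by move: hin; rewrite /inr; lia.
  rewrite (big_pred1 (Ordinal hj)); last first.
    move=> j /=; rewrite /in_file /= -val_eqE /=; move: hin; rewrite /inr; lia.
  rewrite /pt /=; congr h; congr pair; apply: val_inj; rewrite /= ?inordK //; lia.
rewrite big_pred0 // => j; rewrite /in_file /=; have := ltn_ord j; have := ltn_ord i; move: hin; rewrite /inr; lia.
Qed.


Definition jj k t := (t + k - A)%N.
Definition Lt (g : G -> R) k t : R :=
  (if (t == 1%N) && (jj k t == 1%N) then 1 else 0) + Gz g t.-1 (jj k t) + Gz g t (jj k t).-1.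
Definition Ut (g : G -> R) k t : R :=
  (if (t == A) && (jj k t == B) then 1 else 0) + (Gz g t.+1 (jj k t))^-1 + (Gz g t (jj k t).+1)^-1.

Lemma pt1 k t : inr k t -> ((pt k t).1 : nat) = t.-1.
Proof. by rewrite /inr /pt /= => h; rewrite inordK //; lia. Qed.
Lemma pt2 k t : inr k t -> ((pt k t).2 : nat) = (jj k t).-1.
Proof. by rewrite /inr /pt /jj /= => h; rewrite inordK //; lia. Qed.

Lemma Lsum_pt (g : G -> R) k t : inr k t -> Lsum g (pt k t) = Lt g k t.
Proof.
move=> h; rewrite LsumE pt1 // pt2 // /Lt.
have e1 : t.-1.+1 = t by move: h; rewrite /inr; lia.
have e2 : (jj k t).-1.+1 = jj k t by move: h; rewrite /inr /jj; lia.
rewrite e1 e2; congr (_ + _ + _).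
by have -> : ((t.-1 == 0%N) && ((jj k t).-1 == 0%N)) = ((t == 1%N) && (jj k t == 1%N))
  by move: h; rewrite /inr /jj; lia.
Qed.

Lemma Usum_pt (g : G -> R) k t : inr k t -> Usum g (pt k t) = Ut g k t.
Proof.
move=> h; rewrite UsumE pt1 // pt2 // /Ut.
have e1 : t.-1.+1 = t by move: h; rewrite /inr; lia.
have e2 : (jj k t).-1.+1 = jj k t by move: h; rewrite /inr /jj; lia.
rewrite e1 e2; congr (_ + _ + _).
Qed.

Lemma Gz_out (g : G -> R) i j : ~~ inb a b i j -> Gz g i j = 0.
Proof. by rewrite /Gz => /negbTE ->. Qed.
Lemma Go_out (g : G -> R) i j : ~~ inb a b i j -> Go g i j = 1.
Proof. by rewrite /Go => /negbTE ->. Qed.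
Lemma Gz_Go (g : G -> R) i j : inb a b i j -> Gz g i j = Go g i j.
Proof. by rewrite /Gz /Go => ->. Qed.
Lemma Go_gt0 (g : G -> R) i j : (forall x, 0 < g x) -> 0 < Go g i j.
Proof. by rewrite /Go => hg; case: ifP => _; [apply: hg | exact: ltr01]. Qed.

Lemma tele (L U c : nat -> R) lo hi : (lo <= hi)%N ->
  (forall t, (lo <= t < hi)%N -> L t.+1 = U t * c t) ->
  (forall t, (lo <= t <= hi)%N -> U t != 0) ->
  \prod_(lo <= t < hi.+1) (L t / U t) = L lo * \prod_(lo <= t < hi) c t / U hi.
Proof.
move=> hle; rewrite -(subnK hle); elim: (hi - lo)%N => [|d IH] hL hU.
  by rewrite add0n big_nat1 big_geq ?mulr1.
rewrite big_nat_recr /=; last by lia.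
rewrite IH; last 2 first.
- by move=> t ht; apply: hL; lia.
- by move=> t ht; apply: hU; lia.
rewrite !addSn big_nat_recr /=; last by lia.
rewrite hL; last by lia.
have hu : U (d + lo)%N != 0 by apply: hU; lia.
have hu' : U (d + lo).+1 != 0 by apply: hU; lia.
by field; apply/andP.
Qed.

Lemma prod_sub (F : nat -> R) m n N : (m <= n)%N -> (n <= N)%N ->
  (forall s, (s < N)%N -> ~~ (m <= s < n)%N -> F s = 1) ->
  \prod_(0 <= s < N) F s = \prod_(m <= s < n) F s.
Proof.
move=> hmn hnN hF.
rewrite (@prod_cat _ 0 m N) //; last by lia.
rewrite (@prod_cat _ m n N) //.
have h1 : \prod_(0 <= s < m) F s = 1.
  by apply: big1_seq => s /andP [_]; rewrite mem_index_iota => hs; apply: hF; lia.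
have h2 : \prod_(n <= s < N) F s = 1.
  by apply: big1_seq => s /andP [_]; rewrite mem_index_iota => hs; apply: hF; lia.
by rewrite h1 h2 mul1r mulr1.
Qed.


Lemma pfileGo (g : G -> R) k N : (A < N)%N ->
  pfile g k = \prod_(0 <= t < N) Go g t (t + k - A).
Proof.
move=> hN; rewrite /pfile (fileprod _ _ hN); apply: eq_bigr => t _.
case: ifP => h.
  rewrite g_Gv pt1 // pt2 // /Go.
  have -> : inb a b t (t + k - A) by move: h; rewrite /inr /inb; lia.
  by congr Gv; move: h; rewrite /inr /jj; lia.
by rewrite Go_out //; move: h; rewrite /inr /inb; lia.
Qed.

Lemma Gv_neq0 (g : G -> R) i j : (forall x, 0 < g x) -> Gv g i j != 0.
Proof. by move=> hg; rewrite /Gv; apply/lt0r_neq0/hg. Qed.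

Lemma Lt_lo (g : G -> R) k : (1 <= k)%N -> (k < A + B)%N ->
  Lt g k (A - k).+1 = Go g (A - k).+1 (jj k (A - k).+1).-1 * Go g (A - k).+1.-1 (jj k (A - k).+1).
Proof.
move=> hk1 hk2; rewrite /Lt.
case: (ltnP k A) => hkA.
  have -> : jj k (A - k).+1 = 1%N by rewrite /jj; lia.
  rewrite /Gz /Go /inb; repeat (case: ifP => ?); try (exfalso; lia); try ring.
have -> : (A - k)%N = 0%N by lia.
rewrite /Gz /Go /inb /jj /=; repeat (case: ifP => ?); try (exfalso; lia); try ring.
Qed.


Lemma Ut_hi (g : G -> R) k : (forall x, 0 < g x) -> (1 <= k)%N -> (k < A + B)%N ->
  Ut g k (minn A (A + B - k)) *
  (Go g (minn A (A + B - k)).+1 (jj k (minn A (A + B - k)))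
   * Go g (minn A (A + B - k)) (jj k (minn A (A + B - k))).+1) = 1.
Proof.
move=> hg hk1 hk2; rewrite /Ut.
case: (leqP k B) => hkB.
  have -> : minn A (A + B - k) = A by lia.
  have -> : jj k A = k by rewrite /jj; lia.
  rewrite /Gz /Go /inb /=; repeat (case: ifP => ?); try (exfalso; lia);
    rewrite ?invr0 ?invr1; try field; rewrite ?Gv_neq0 //.
have -> : minn A (A + B - k) = (A + B - k)%N by lia.
have -> : jj k (A + B - k) = B by rewrite /jj; lia.
rewrite /Gz /Go /inb /=; repeat (case: ifP => ?); try (exfalso; lia);
  rewrite ?invr0 ?invr1; try field; rewrite ?Gv_neq0 //.
Qed.


Lemma pfile_gt0 (g : G -> R) k : (forall x, 0 < g x) -> 0 < pfile g k.
Proof. by move=> hg; rewrite /pfile; apply: prodr_gt0 => x _; apply: hg. Qed.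

Lemma file_step (g : G -> R) k : (forall x, 0 < g x) -> (1 <= k)%N -> (k < A + B)%N ->
  pfile (file_toggle k g) k * pfile g k = pfile g k.-1 * pfile g k.+1.
Proof.
move=> hg hk1 hk2.
have hL := Lt_lo g hk1 hk2.
have hU := Ut_hi hg hk1 hk2.
set lo := (A - k).+1 in hL *.
set hi := minn A (A + B - k) in hU *.
have hlohi : (lo <= hi)%N by rewrite /lo /hi; lia.
have inrE : forall t, inr k t = (lo <= t <= hi)%N by move=> t; rewrite /inr /lo /hi; lia.
have hp : pfile g k != 0 by apply: lt0r_neq0; apply: pfile_gt0.
have step1 : pfile (file_toggle k g) k
   = (pfile g k)^-1 * \prod_(x : G | in_file k x) (Lsum g x / Usum g x).
  rewrite /pfile -prodfV -big_split /=; apply: eq_bigr => x hx.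
  by rewrite file_toggleE hx /Tv mulrA.
rewrite step1 mulrAC mulVf // mul1r.
rewrite (@fileprod _ _ A.+2) //.
rewrite (@prod_sub _ lo hi.+1 A.+2); [| lia | rewrite /hi; lia |]; last first.
  by move=> s _ hs; rewrite inrE; case: ifP => //; lia.
rewrite (eq_big_nat _ _ (F2 := fun t => Lt g k t / Ut g k t)); last first.
  move=> t ht; have hi' : inr k t by rewrite inrE; lia.
  by rewrite hi' Lsum_pt // Usum_pt.
rewrite (tele (c := fun t => Go g t.+1 (jj k t) * Go g t (jj k t).+1)) //; last 2 first.
- move=> t ht.
  have ej : jj k t.+1 = (jj k t).+1 by rewrite /jj /lo in ht *; lia.
  rewrite /Lt /Ut ej succnK.
  have -> : ((t.+1 == 1%N) && ((jj k t).+1 == 1%N)) = false by rewrite /lo in ht; lia.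
  have -> : ((t == A) && (jj k t == B)) = false by rewrite /hi in ht; lia.
  have h1 : inb a b t (jj k t).+1 by rewrite /inb /jj; rewrite /lo /hi in ht; lia.
  have h2 : inb a b t.+1 (jj k t) by rewrite /inb /jj; rewrite /lo /hi in ht; lia.
  rewrite (Gz_Go _ h1) (Gz_Go _ h2).
  have p1 := Go_gt0 t (jj k t).+1 hg.
  have p2 := Go_gt0 t.+1 (jj k t) hg.
  field; apply/andP; split; apply: lt0r_neq0 => //.
- move=> t ht; rewrite -Usum_pt; last by rewrite inrE.
  by apply: lt0r_neq0; apply: Usum_gt0.
rewrite (@pfileGo g k.-1 A.+2) // (@pfileGo g k.+1 A.+2) //.
rewrite (@prod_sub _ lo hi.+2 A.+2); [| lia | rewrite /hi; lia |]; last first.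
  move=> s _ hs; apply: Go_out; rewrite /inb; rewrite /lo /hi in hs; lia.
rewrite (@prod_sub _ lo.-1 hi.+1 A.+2); [| lia | rewrite /hi; lia |]; last first.
  move=> s _ hs; apply: Go_out; rewrite /inb; rewrite /lo /hi in hs; lia.
rewrite (@big_ltn _ _ _ lo hi.+2); last by lia.
rewrite (@big_nat_recr _ _ _ hi.+1 lo.+1) /=; last by lia.
rewrite big_add1 /=.
rewrite (@big_ltn _ _ _ lo.-1 hi.+1); last by rewrite /lo; lia.
have -> : lo.-1.+1 = lo by rewrite /lo.
rewrite (@big_nat_recr _ _ _ hi lo) /=; last by lia.
rewrite big_split /=.
have e1 : (lo + k.-1 - A)%N = (jj k lo).-1 by rewrite /jj /lo; lia.
have e2 : (hi.+1 + k.-1 - A)%N = jj k hi by rewrite /jj /lo /hi in hlohi *; lia.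
have e3 : (lo.-1 + k.+1 - A)%N = jj k lo by rewrite /jj /lo; lia.
have e4 : (hi + k.+1 - A)%N = (jj k hi).+1 by rewrite /jj /lo /hi in hlohi *; lia.
rewrite e1 e2 e3 e4.
rewrite (eq_big_nat _ _ (F1 := fun i => Go g i.+1 (i.+1 + k.-1 - A)) (F2 := fun t => Go g t.+1 (jj k t))); last first.
  by move=> t ht; congr Go; rewrite /jj /lo in ht *; lia.
rewrite (eq_big_nat _ _ (F1 := fun i => Go g i (i + k.+1 - A)) (F2 := fun t => Go g t (jj k t).+1)); last first.
  by move=> t ht; congr Go; rewrite /jj /lo in ht *; lia.
have hX : Go g hi.+1 (jj k hi) * Go g hi (jj k hi).+1 != 0.
  by apply: lt0r_neq0; apply: mulr_gt0; apply: Go_gt0.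
have hUt : Ut g k hi = (Go g hi.+1 (jj k hi) * Go g hi (jj k hi).+1)^-1.
  by apply: (mulIf hX); rewrite hU mulVf.
rewrite hUt invrK hL.
ring.
Qed.


Lemma pfile0 (g : G -> R) : pfile g 0 = 1.
Proof. by rewrite /pfile big_pred0 // => x; rewrite /in_file; have := ltn_ord x.1; lia. Qed.

Lemma pfile_other (g : G -> R) k k' : k' != k ->
  pfile (file_toggle k g) k' = pfile g k'.
Proof.
move=> hne; rewrite /pfile; apply: eq_bigr => x hx.
rewrite file_toggleE; case: ifP => // hk; move: hx hk hne; rewrite /in_file; lia.
Qed.

Definition gm (f : G -> R) m := foldl (fun g k => file_toggle k g) f (iota 1 m).

Lemma gm_inv (f : G -> R) (hf : forall x, 0 < f x) m : (m < A + B)%N ->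
  (forall x, 0 < gm f m x) /\
  forall k, pfile (gm f m) k =
    if (1 <= k <= m)%N then pfile f k.+1 / pfile f 1 else pfile f k.
Proof.
elim: m => [|m IH] hm.
  by split => // k; rewrite /gm /=; case: ifP => //; lia.
have [IHp IHf] := IH (ltnW hm).
have gmS : gm f m.+1 = file_toggle m.+1 (gm f m).
  have e : iota 1 m.+1 = rcons (iota 1 m) m.+1.
    by rewrite -cats1 -[in LHS](addn1 m) iotaD add1n.
  by rewrite /gm e foldl_rcons.
rewrite gmS; split; first exact: file_toggle_gt0.
move=> k; case: (eqVneq k m.+1) => [->|hk]; last first.
  rewrite pfile_other // IHf; case: ifP; case: ifP => //; lia.
have hs := @file_step (gm f m) m.+1 IHp (ltn0Sn _) hm.
rewrite !IHf in hs.
have e1 : (0 < m.+1 <= m)%N = false by lia.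
have e2 : (0 < m.+2 <= m)%N = false by lia.
rewrite e1 e2 in hs.
have h1 : pfile f m.+1 != 0 by apply: lt0r_neq0; apply: pfile_gt0.
have hp1 : pfile f 1 != 0 by apply: lt0r_neq0; apply: pfile_gt0.
rewrite ifT; last by lia.
move: hs.
clear e1 e2; case: m IH IHp IHf hm gmS h1 => [|m] IH IHp IHf hm gmS h1 /=.
  rewrite /= pfile0 mul1r => hs.
  by apply: (mulIf h1); rewrite hs; field.
move=> hs; apply: (mulIf h1); rewrite hs.
by rewrite ltnSn; field.
Qed.


Lemma map_shift (q q' : nat -> R) n :
  (forall k, (1 <= k <= n)%N -> q' k = q k.+1) -> q' n.+1 = q 1%N ->
  map q' (iota 1 n.+1) = rot 1 (map q (iota 1 n.+1)).
Proof.
move=> hk hn.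
have e : iota 1 n.+1 = rcons (iota 1 n) n.+1 by rewrite -cats1 -[in LHS](addn1 n) iotaD add1n.
rewrite [in LHS]e map_rcons.
rewrite (_ : map q (iota 1 n.+1) = q 1%N :: map q (iota 2 n)) // rot1_cons hn.
congr rcons.
have -> : iota 2 n = map (addn 1) (iota 1 n) by rewrite -iotaDl.
rewrite -map_comp; apply/eq_in_map => k; rewrite mem_iota => h /=.
rewrite hk ?add1n //; lia.
Qed.

Lemma main_sec (f : G -> R) (hf : forall x, 0 < f x) :
  Qvec (bpromotion f) = rot 1 (Qvec f).
Proof.
have hm : (A + B - 1 < A + B)%N by lia.
have [_ hQ] := gm_inv hf hm.
have bp : bpromotion f = gm f (A + B - 1) by [].
have pf0 : forall k, pfile f k != 0 by move=> k; apply: lt0r_neq0; apply: pfile_gt0.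
have hn : (A + B - 1)%N = (a + b).+1 by lia.
have hn2 : (A + B)%N = (a + b).+2 by lia.
rewrite hn in hQ.
rewrite /Qvec bp hn hn2.
apply: map_shift.
  move=> k hk; rewrite /qfile !hQ ifT; last by lia.
  case: k hk => [|[|k]] hk //=.
    by rewrite pfile0; field.
  rewrite ifT; last by lia.
  by field; rewrite ?pf0.
rewrite /qfile !hQ ifF; last by lia.
rewrite ifT; last by lia.
by rewrite /= pfile0; field; rewrite ?pf0.
Qed.

End Main.

Unset Implicit Arguments.

Theorem corollary7 (R : realFieldType) (a b : nat) (ha : (1 <= a)%N) (hb : (1 <= b)%N)
  (f : grid a b -> R) (hf : forall x, 0 < f x) :
  Qvec (bpromotion f) = rot 1 (Qvec f).
Proof.
case: a ha f hf => [|a] // _; case: b hb => [|b] // _ f hf.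
exact: main_sec.
Qed.
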